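(* Let $A\in\mathbb{C}^{n\times n}$ with $\mathrm{Ind}(A)=k$, and $m\in\mathbb{N}=\{1,2,\dots\}$. Then the system $$AX=(A^{\mathrm{cEP}})^mA^mP_{A^m},\qquad \mathcal{R}(X)\subseteq\mathcal{R}(A^k)$$ in $X\in\mathbb{C}^{n\times n}$ is consistent and its unique solution is $X=A^{\#_m}$.
   Context: For $A\in\mathbb{C}^{n\times n}$: $A^\dagger$ Moore–Penrose inverse, $P_A=AA^\dagger$, $\mathcal{R}(\cdot)$ column space. The index $\mathrm{Ind}(A)$ is the smallest nonnegative integer $k$ with $\mathcal{R}(A^k)=\mathcal{R}(A^{k+1})$ ($A^0=I_n$). The core-EP inverse $A^{\mathrm{cEP}}$ is the unique $X$ with $XAX=X$ and $\mathcal{R}(X)=\mathcal{R}(X^* )=\mathcal{R}(A^k)$. For $m\in\mathbb{N}$, the $m$-weak group inverse is $A^{\mathrm{WG}_m}:=(A^{\mathrm{cEP}})^{m+1}A^m$ and the $m$-weak core inverse is $A^{\#_m}:=A^{\mathrm{WG}_m}P_{A^m}$. *)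

(* Defs.v *)
(* Matrices over an arbitrary numClosedFieldType C
   (an algebraically closed field with conjugation and norm; the complex
   numbers are an instance). *)
From HB Require Import structures.
From mathcomp Require Import all_boot all_order all_algebra.
From Stdlib Require Import ClassicalEpsilon.
Set Implicit Arguments. Unset Strict Implicit. Unset Printing Implicit Defensive.
Import Order.TTheory GRing.Theory Num.Theory.
Local Open Scope ring_scope.

Section Defs.
Variables (C : numClosedFieldType) (n : nat).
Implicit Types A X : 'M[C]_n.

Definition ctr A : 'M[C]_n := map_mx Num.conj A^T.

(* column-space inclusion R(X) ⊆ R(Y) and equality R(X) = R(Y),
   via row spaces of transposes *)
Definition colincl (p : nat) (X : 'M[C]_(n, p)) (Y : 'M[C]_(n, p)) : bool :=
  (X^T <= Y^T)%MS.
Definition coleq (X Y : 'M[C]_n) : bool := (X^T == Y^T)%MS.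

Definition is_MP A X : Prop :=
  [/\ A *m X *m A = A, X *m A *m X = X,
      ctr (A *m X) = A *m X & ctr (X *m A) = X *m A].

Definition mpinv A : 'M[C]_n := epsilon (inhabits A) (is_MP A).

Definition projA A : 'M[C]_n := A *m mpinv A.

Definition is_index A (k : nat) : Prop :=
  coleq (A ^+ k) (A ^+ k.+1) /\ forall j, (j < k)%N -> ~~ coleq (A ^+ j) (A ^+ j.+1).

Definition is_coreEP A X : Prop :=
  exists k, [/\ is_index A k, X *m A *m X = X,
                coleq X (A ^+ k) & coleq (ctr X) (A ^+ k)].
Definition coreEP A : 'M[C]_n := epsilon (inhabits A) (is_coreEP A).

Definition wginv (m : nat) A : 'M[C]_n := (coreEP A) ^+ m.+1 *m A ^+ m.
Definition wcoreinv (m : nat) A : 'M[C]_n := wginv m A *m projA (A ^+ m).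

End Defs.

(* Main.v *)
Require Import Defs.
From mathcomp Require Import all_boot all_order all_algebra.
From Stdlib Require Import ClassicalEpsilon.
Import GRing.Theory Num.Theory.
Local Open Scope ring_scope.

Section Aux.
Variables (C : numClosedFieldType) (n : nat).

Lemma subT (p q : nat) (X : 'M[C]_(n, p)) (Y : 'M[C]_(n, q)) :
  (X^T <= Y^T)%MS -> exists D : 'M[C]_(q, p), X = Y *m D.
Proof.
move/submxP=> [D HD]; exists D^T.
by rewrite -[X]trmxK HD trmx_mul trmxK.
Qed.

Lemma Tsub (p q : nat) (Y : 'M[C]_(n, q)) (D : 'M[C]_(q, p)) :
  ((Y *m D)^T <= Y^T)%MS.
Proof. by rewrite trmx_mul submxMl. Qed.

Lemma index_uniq (A : 'M[C]_n) k k' : is_index A k -> is_index A k' -> k = k'.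
Proof.
move=> [h1 h2] [h1' h2']; case: (ltngtP k k') => // H.
- by move: (h2' _ H); rewrite h1.
- by move: (h2 _ H); rewrite h1'.
Qed.

Lemma powS (A : 'M[C]_n) k : A ^+ k.+1 = A *m A ^+ k.
Proof. by rewrite exprS mulmxE. Qed.
Lemma powSr (A : 'M[C]_n) k : A ^+ k.+1 = A ^+ k *m A.
Proof. by rewrite exprSr mulmxE. Qed.

Lemma conjK (p q : nat) (M : 'M[C]_(p, q)) :
  map_mx Num.conj (map_mx Num.conj M) = M.
Proof. by apply/matrixP => i j; rewrite !mxE conjCK. Qed.

Section Exist.
Variables (A : 'M[C]_n) (k : nat).
Hypothesis hk : is_index A k.

Let M := A ^+ k.
Let r := \rank M^T.
Let Bt : 'M[C]_(r, n) := row_base M^T.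
Let B := Bt^T.
Let Bs := map_mx Num.conj Bt.
Let G := Bs *m B.

Lemma G_unit : G \in unitmx.
Proof.
rewrite unitmxE unitfE; apply/negP => /det0P [v vn0 vG].
set y := v *m Bs.
have yB : y *m B = 0 by rewrite /y -mulmxA.
have yy : y *m (map_mx Num.conj y)^T = 0.
  by rewrite /y map_mxM conjK trmx_mul mulmxA yB mul0mx.
have y0 : y = 0.
  apply/matrixP => i j; rewrite (ord1 i) [RHS]mxE.
  move/matrixP: yy => /(_ 0 0); rewrite !mxE => hs.
  have hs' : \sum_i y 0 i * (y 0 i)^* = 0.
    by rewrite -[RHS]hs; apply: eq_bigr => l _; rewrite !mxE.
  have := (@psumr_eq0P _ _ xpredT _ (fun k _ => mul_conjC_ge0 (y 0 k)) hs' j).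
  by move=> /(_ isT) /eqP; rewrite mul_conjC_eq0 mxE => /eqP.
have : map_mx Num.conj v *m Bt = 0 *m Bt.
  by rewrite mul0mx -[Bt]conjK -map_mxM -/Bs -/y y0 map_mx0.
move/(row_free_inj (row_base_free M^T)) => cv.
move/negP: vn0; apply; apply/eqP.
by rewrite -[v]conjK cv map_mx0.
Qed.

Lemma coreEP_exists : exists X, is_coreEP A X.
Proof.
have [U HU] : exists U : 'M[C]_(n, r), B = M *m U.
  by apply: subT; rewrite trmxK /Bt eq_row_base submx_refl.
have [V HV] : exists V : 'M[C]_(r, n), M = B *m V.
  by apply: subT; rewrite trmxK /Bt eq_row_base submx_refl.
have [F2 HF2] : exists F : 'M[C]_n, M = A ^+ k.+1 *m F.
  by case: hk => /andP [h _] _; apply: subT.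
pose T := V *m A *m U.
have hAB : A *m B = B *m T.
  have e1 : A *m M = M *m A by rewrite /M -powS powSr.
  by rewrite {1}HU mulmxA e1 {1}HV /T !mulmxA.
pose S := V *m F2 *m U.
have hTS : T *m S = 1%:M.
  have hB : B *m (T *m S) = B.
    rewrite mulmxA -hAB /S !mulmxA -(mulmxA A B V) -HV -powS -HF2 -HU //.
  have : (T *m S)^T *m Bt = 1%:M *m Bt.
    by rewrite mul1mx -[Bt]trmxK -trmx_mul hB.
  by move/(row_free_inj (row_base_free M^T)) => /(congr1 trmx); rewrite trmxK trmx1.
have [Tu _] := mulmx1_unit hTS.
have GTu : G *m T \in unitmx by rewrite unitmx_mul G_unit Tu.
pose Z := invmx (G *m T).
pose X := B *m Z *m Bs.
have hBsAB : Bs *m A *m B = G *m T by rewrite -mulmxA hAB mulmxA.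
have hXAB : X *m A *m B = B.
  by rewrite /X -!mulmxA (mulmxA Bs) hBsAB /Z mulVmx // mulmx1.
have hXM : coleq X M.
  apply/andP; split.
    by rewrite /X HU -!mulmxA Tsub.
  have eM : M = X *m (A *m B *m V) by rewrite !mulmxA hXAB -HV.
  by rewrite {1}eM Tsub.
exists X, k; split => //.
- by rewrite /X -!mulmxA (mulmxA Bs) (mulmxA (Bs *m A)) hBsAB (mulmxA Z (G *m T)) /Z mulVmx // mul1mx.
- have hsub : ((ctr X)^T <= M^T)%MS.
    rewrite /ctr map_trmx trmxK /X !map_mxM conjK.
    apply: submx_trans (submxMl _ _) _.
    by rewrite /Bt eq_row_base submx_refl.
  rewrite /coleq -(mxrank_leqif_eq hsub).2.
  rewrite mxrank_tr /ctr mxrank_map mxrank_tr.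
  by move/eqmx_rank: hXM => /eqP e; rewrite -[\rank X]mxrank_tr e.
Qed.

End Exist.
End Aux.
Arguments subT {C n p q X Y}.
Arguments Tsub {C n p q Y D}.
Arguments powS {C n A k}.
Arguments powSr {C n A k}.

Theorem theorem4p10 (C : numClosedFieldType) (n : nat) (A : 'M[C]_n)
    (k m : nat) :
  is_index A k -> (0 < m)%N ->
  (exists X : 'M[C]_n,
      A *m X = (coreEP A) ^+ m *m A ^+ m *m projA (A ^+ m) /\ colincl X (A ^+ k)) /\
  (forall X : 'M[C]_n,
      A *m X = (coreEP A) ^+ m *m A ^+ m *m projA (A ^+ m) /\ colincl X (A ^+ k) <->
      X = wcoreinv m A).
Proof.
move=> hk; case: m => // m _.
have [k' [hk' hXAX hXk _]] := epsilon_spec (inhabits A) _ (@coreEP_exists C n A k hk).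
rewrite -/(coreEP A) in hXAX hXk.
have ekk := @index_uniq C n A _ _ hk hk'; subst k'.
set X0 := coreEP A in hXAX hXk *.
case/andP: hXk => hX1 hX2.
have [F1 HF1] := subT hX1.
have [F3 HF3] := subT hX2.
have [F2 HF2] : exists F : 'M[C]_n, A ^+ k = A ^+ k.+1 *m F.
  by case: hk => /andP [h _] _; apply: subT.
have hAXX : A *m X0 *m X0 = X0.
  have e : X0 = A *m X0 *m (F3 *m F2 *m F1).
    by rewrite !mulmxA -(mulmxA A) -HF3 -powS -HF2 -HF1.
  have h2 : A *m X0 *m A *m X0 = A *m X0 by rewrite -!mulmxA (mulmxA X0) hXAX.
  by rewrite {2}e !mulmxA h2 [RHS]e !mulmxA.
have uniq0 : forall D : 'M[C]_n, A *m D = 0 -> colincl D (A ^+ k) -> D = 0.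
  move=> D hD /subT [E eD]; rewrite eD in hD *.
  by rewrite HF3 -mulmxA -hXAX -!mulmxA (mulmxA X0 F3) -HF3 hD !mulmx0.
set P := projA (A ^+ m.+1).
have hW1 : A *m wcoreinv m.+1 A = X0 ^+ m.+1 *m A ^+ m.+1 *m P.
  have ex : X0 ^+ m.+2 = X0 *m (X0 *m X0 ^+ m) by rewrite !exprS mulmxE.
  have ex2 : X0 *m X0 ^+ m = X0 ^+ m.+1 by rewrite exprS mulmxE.
  rewrite /wcoreinv /wginv -/X0 -/P ex !mulmxA hAXX ex2.
  done.
have hW2 : colincl (wcoreinv m.+1 A) (A ^+ k).
  by rewrite /colincl /wcoreinv /wginv -/X0 powS HF1 -!mulmxA Tsub.
split; first by exists (wcoreinv m.+1 A).
move=> X; split; last by move=> ->.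
move=> [h1 h2]; apply/eqP; rewrite -subr_eq0; apply/eqP; apply: uniq0.
  by rewrite mulmxBr h1 hW1 subrr.
have [D1 ->] := subT h2; have [D2 ->] := subT hW2.
by rewrite -mulmxBr /colincl Tsub.
Qed.
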